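(* Let $z\in\mathcal F_\mathbb Z\setminus\{\Theta\}$, let $(q,r)$ be its lexicographically maximal FPF-visible inversion, and let $m$ be the largest even integer with $z(m)\ne m-1$. Then: - $q$ is the maximal FPF-visible descent of $z$; - $r$ is the maximal integer with $z(r)<\min\{q,z(q)\}$; - $z(q+1)<z(q+2)<\cdots<z(m)\le q$; - either $z(q)<q<r\le m$, or $q<z(q)=r+1=m$.
   Context: Let $S_\mathbb Z$ be the group of finitely supported permutations of $\mathbb Z$. Let $\Theta(i)=i-(-1)^i$ and $\mathcal F_\mathbb Z=\{w^{-1}\Theta w:w\in S_\mathbb Z\}$. A pair $(i,j)\in\mathbb Z\times\mathbb Z$ is an FPF-visible inversion of $z$ if $i<j$ and $z(j)<\min\{i,z(i)\}$. An integer $i$ is an FPF-visible descent of $z$ if $(i,i+1)$ is an FPF-visible inversion. Pairs are ordered lexicographically. *)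

(* Defs.v *)
From Stdlib Require Import ZArith Lia.
Open Scope Z_scope.

Definition Theta (i : Z) : Z := if Z.even i then i - 1 else i + 1.

Definition fin_supp_perm (w winv : Z -> Z) : Prop :=
  (forall i, winv (w i) = i) /\ (forall i, w (winv i) = i) /\
  (exists N : Z, forall i, N < Z.abs i -> w i = i).

Definition in_FZ (z : Z -> Z) : Prop :=
  exists w winv, fin_supp_perm w winv /\ forall i, z i = winv (Theta (w i)).

Definition fpf_vis_inv (z : Z -> Z) (i j : Z) : Prop :=
  i < j /\ z j < Z.min i (z i).

Definition fpf_vis_des (z : Z -> Z) (i : Z) : Prop := fpf_vis_inv z i (i + 1).

Definition lex_le (i j q r : Z) : Prop := i < q \/ (i = q /\ j <= r).

(* Main.v *)
Require Import Defs.
From Stdlib Require Import ZArith Lia.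
Open Scope Z_scope.

Lemma Theta_inv x : Theta (Theta x) = x.
Proof.
  unfold Theta. destruct (Z.even x) eqn:HE.
  - rewrite Z.even_sub, HE. simpl. lia.
  - rewrite Z.even_add, HE. simpl. lia.
Qed.

Lemma Theta_nfix x : Theta x <> x.
Proof. unfold Theta. destruct (Z.even x); lia. Qed.

Theorem lemma3p15 (z : Z -> Z) (q r m : Z) :
  in_FZ z ->
  ~ (forall i, z i = Theta i) ->
  fpf_vis_inv z q r ->
  (forall i j, fpf_vis_inv z i j -> lex_le i j q r) ->
  Z.even m = true -> z m <> m - 1 ->
  (forall k, Z.even k = true -> z k <> k - 1 -> k <= m) ->
  (fpf_vis_des z q /\ (forall i, fpf_vis_des z i -> i <= q)) /\
  (z r < Z.min q (z q) /\ (forall j, z j < Z.min q (z q) -> j <= r)) /\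
  ((forall i, q + 1 <= i < m -> z i < z (i + 1)) /\ z m <= q) /\
  ((z q < q /\ q < r /\ r <= m) \/ (q < z q /\ z q = r + 1 /\ r + 1 = m)).
Proof.
  intros [w [winv [[H1 [H2 _]] Hz]]] _ [Hqr Hzr] Hmax Hme Hm Hmmax.
  assert (Hinv : forall i, z (z i) = i).
  { intro i. rewrite !Hz, H2, Theta_inv, H1. reflexivity. }
  assert (Hfix : forall i, z i <> i).
  { intros i E. rewrite Hz in E. apply (Theta_nfix (w i)).
    rewrite <- E at 2. rewrite H2. reflexivity. }
  assert (Hinj : forall x y, z x = z y -> x = y).
  { intros x y E. rewrite <- (Hinv x), <- (Hinv y), E. reflexivity. }
  assert (Hev : forall j, m < j -> Z.even j = true -> z j = j - 1).
  { intros j Hj Ej. destruct (Z.eq_dec (z j) (j - 1)) as [e|n]; auto.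
    specialize (Hmmax j Ej n). lia. }
  assert (Hbig : forall j, m < j -> z j = j - 1 \/ z j = j + 1).
  { intros j Hj. destruct (Z.even j) eqn:Ej.
    - left; auto.
    - right. assert (E2 : z (j+1) = j + 1 - 1).
      { apply Hev. lia. rewrite Z.even_add, Ej. reflexivity. }
      replace (j + 1 - 1) with j in E2 by lia.
      transitivity (z (z (j+1))). rewrite E2; reflexivity. apply Hinv. }
  assert (noinv : forall i j, q < i -> i < j -> z j >= Z.min i (z i)).
  { intros i j Hi Hij.
    destruct (Z_lt_ge_dec (z j) (Z.min i (z i))) as [l|g]; auto.
    destruct (Hmax i j (conj Hij l)); lia. }
  assert (Hrm : r <= m).
  { destruct (Z_le_gt_dec r m) as [l|g]; auto.
    destruct (Hbig r ltac:(lia)); lia. }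
  assert (Ha : z m <= m - 2).
  { destruct (Z_le_gt_dec (z m) (m - 1)) as [l|g].
    - lia.
    - exfalso. destruct (Z.eq_dec (z m) m) as [e|n]. apply (Hfix m e).
      assert (m < z m) by lia.
      assert (E3 : z (m+2) = m + 2 - 1) by (apply Hev; [lia| rewrite Z.even_add, Hme; reflexivity]).
      assert (E4 : z (m+1) = m+2) by (replace (m+1) with (m+2-1) by lia; rewrite <- E3; apply Hinv).
      destruct (Z.eq_dec (z m) (m+1)) as [e'|n'].
      + rewrite <- e', Hinv in E4. lia.
      + destruct (Hbig (z m) H); rewrite Hinv in H0; lia. }
  assert (Haq : z m <= q).
  { destruct (Z_le_gt_dec (z m) q) as [l|g]; auto. exfalso.
    pose proof (noinv (m-1) m ltac:(lia) ltac:(lia)) as N1.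
    assert (z (m-1) <> z m) by (intro E; apply Hinj in E; lia).
    pose proof (noinv (z m) (m-1) ltac:(lia) ltac:(lia)) as N2.
    rewrite Hinv in N2. lia. }
  assert (HL : forall j, q < j < m -> z j < z m).
  { intros j Hj. pose proof (noinv j m ltac:(lia) ltac:(lia)).
    assert (z j <> z m) by (intro E; apply Hinj in E; lia). lia. }
  assert (Mono : forall i j, q < i -> i < j -> j <= m -> z i < z j).
  { intros i j Hi Hij Hj. pose proof (noinv i j Hi Hij).
    assert (z j <= q).
    { destruct (Z.eq_dec j m). subst; lia. pose proof (HL j ltac:(lia)). lia. }
    assert (z i <> z j) by (intro E; apply Hinj in E; lia). lia. }
  split; [split|split; [split|split; [split|]]].
  - unfold fpf_vis_des, fpf_vis_inv.
    destruct (Z.eq_dec r (q+1)) as [e|n]. subst; lia.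
    pose proof (noinv (q+1) r ltac:(lia) ltac:(lia)).
    assert (z (q+1) <> z r) by (intro E; apply Hinj in E; lia). lia.
  - intros i Hi. destruct (Hmax i (i+1) Hi); lia.
  - exact Hzr.
  - intros j Hj. destruct (Z_le_gt_dec j q). lia.
    assert (Hqj : q < j) by lia. destruct (Hmax q j (conj Hqj Hj)); lia.
  - intros i Hi. apply Mono; lia.
  - exact Haq.
  - destruct (Z_lt_ge_dec (z q) q) as [l|g]. left; lia.
    right. assert (q < z q) by (pose proof (Hfix q); lia).
    assert (Hc : z q <= m).
    { destruct (Z_le_gt_dec (z q) m) as [l|g']; auto.
      destruct (Hbig (z q) ltac:(lia)); rewrite Hinv in H0; lia. }
    assert (Hcm : z q = m).
    { destruct (Z.eq_dec (z q) m) as [e|n]; auto.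
      pose proof (Mono (z q) m H ltac:(lia) ltac:(lia)). rewrite Hinv in H0. lia. }
    assert (r <> m) by (intro e; subst r; rewrite <- Hcm, Hinv in Hzr; lia).
    pose proof (HL (m-1) ltac:(lia)).
    assert (Hzm : z m = q) by (rewrite <- Hcm; apply Hinv).
    assert (Hi1 : q < m - 1) by lia.
    assert (Hi2 : z (m-1) < Z.min q (z q)) by lia.
    destruct (Hmax q (m-1) (conj Hi1 Hi2)); lia.
Qed.
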